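(* Let $r,s,t$ be nonzero reals and let $\lambda=(\lambda_k)_{k\ge 0}$ be a strictly increasing sequence of positive reals with $\lambda_k\to\infty$. For $x\in\omega$ put $\widehat W_n(x)=\frac{1}{\lambda_n}\sum_{k=0}^n(\lambda_k-\lambda_{k-1})(rx_k+sx_{k-1}+tx_{k-2})$ and, for $\mu\in\{c_0,c,\ell_\infty,\ell_p\}$, $\mu^\lambda(\widehat B)=\{x\in\omega:(\widehat W_n(x))_n\in\mu\}$, normed by $\|x\|=\sup_n|\widehat W_n(x)|$ for $\mu\in\{c_0,c,\ell_\infty\}$ and by $\|x\|=(\sum_n|\widehat W_n(x)|^p)^{1/p}$ for $\mu=\ell_p$, $1\le p<\infty$. Then $c_0^\lambda(\widehat B)$, $c^\lambda(\widehat B)$, $\ell_\infty^\lambda(\widehat B)$ and $\ell_p^\lambda(\widehat B)$ are norm isomorphic to $c_0$, $c$, $\ell_\infty$ and $\ell_p$ respectively, i.e. in each case there is a linear bijection onto the classical space preserving norms.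
   Context: $\omega$ is the space of all complex sequences indexed by $\mathbb{N}=\{0,1,2,\dots\}$; $\ell_\infty,c,c_0,\ell_p$ are the spaces of bounded, convergent, null and absolutely $p$-summable sequences with their usual norms ($\sup$-norm on the first three). Convention: terms with negative subscript are $0$ ($x_{-1}=x_{-2}=0$, $\lambda_{-1}=0$). *)

(* Defs.v *)
From Stdlib Require Import Reals.
From Coquelicot Require Import Coquelicot.
Open Scope R_scope.

Definition seqC := nat -> C.

(* x_{k-1}, with x_{-1} = 0 *)
Definition shift1 (x : seqC) : seqC :=
  fun k => match k with O => RtoC 0 | S k' => x k' end.

(* lambda_{k-1}, with lambda_{-1} = 0 *)
Definition lprev (lam : nat -> R) (k : nat) : R :=
  match k with O => 0 | S k' => lam k' end.

Definition What (r s t : R) (lam : nat -> R) (x : seqC) : seqC :=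
  fun n => Cmult (RtoC (/ lam n))
    (sum_n (fun k => Cmult (RtoC (lam k - lprev lam k))
       (Cplus (Cplus (Cmult (RtoC r) (x k)) (Cmult (RtoC s) (shift1 x k)))
              (Cmult (RtoC t) (shift1 (shift1 x) k)))) n).

Definition is_c0 (y : seqC) : Prop := filterlim y eventually (locally (RtoC 0)).
Definition is_c (y : seqC) : Prop := exists l : C, filterlim y eventually (locally l).
Definition is_linf (y : seqC) : Prop := exists M : R, forall n, Cmod (y n) <= M.

(* a^p for a >= 0, p > 0, with 0^p = 0 (Stdlib's Rpower 0 p is 1) *)
Definition pw (a p : R) : R := if Req_EM_T a 0 then 0 else Rpower a p.

Definition is_lp (p : R) (y : seqC) : Prop := ex_series (fun n => pw (Cmod (y n)) p).

Definition supnorm (y : seqC) : R := real (Lub_Rbar (fun a => exists n, a = Cmod (y n))).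
Definition lpnorm (p : R) (y : seqC) : R := pw (Series (fun n => pw (Cmod (y n)) p)) (/ p).

Definition lamB (mu : seqC -> Prop) (r s t : R) (lam : nat -> R) : seqC -> Prop :=
  fun x => mu (What r s t lam x).
Definition lamB_supnorm (r s t : R) (lam : nat -> R) (x : seqC) : R :=
  supnorm (What r s t lam x).
Definition lamB_lpnorm (p r s t : R) (lam : nat -> R) (x : seqC) : R :=
  lpnorm p (What r s t lam x).

Definition norm_iso (X Y : seqC -> Prop) (nX nY : seqC -> R) : Prop :=
  exists T : seqC -> seqC,
    (forall (a : C) (x y : seqC), X x -> X y ->
       T (fun n => Cplus (Cmult a (x n)) (y n)) =
       (fun n => Cplus (Cmult a (T x n)) (T y n))) /\
    (forall x, X x -> Y (T x)) /\
    (forall x y, X x -> X y -> T x = T y -> x = y) /\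
    (forall y, Y y -> exists x, X x /\ T x = y) /\
    (forall x, X x -> nY (T x) = nX x).

(* Main.v *)
Require Import Defs.
From Stdlib Require Import Reals Lra Lia FunctionalExtensionality.
From Coquelicot Require Import Coquelicot.
Open Scope R_scope.

Lemma RtoC_neq0 (a : R) : a <> 0 -> RtoC a <> RtoC 0.
Proof. intros H E; apply H; injection E; auto. Qed.

Lemma Cplus_eqP (a b : C) : @plus C_AbelianMonoid a b = Cplus a b.
Proof. reflexivity. Qed.

Ltac fixC := repeat match goal with |- context[@plus C_AbelianMonoid ?a ?b] => change (@plus C_AbelianMonoid a b) with (Cplus a b) end;
  match goal with |- @eq _ ?a ?b => change (@eq C a b) end.

Lemma sum_lin (f g h : nat -> C) (a : C) :
  (forall k, f k = Cplus (Cmult a (g k)) (h k)) ->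
  forall n, sum_n f n = Cplus (Cmult a (sum_n g n)) (sum_n h n).
Proof.
  intros Hf n; induction n.
  - rewrite !sum_O; apply Hf.
  - rewrite !sum_Sn, IHn, Hf; fixC. ring.
Qed.

Section Main.
Variables (r s t : R) (lam : nat -> R).
Hypothesis hr : r <> 0.
Hypothesis hpos : forall k, 0 < lam k.
Hypothesis hinc : forall k, lam k < lam (S k).

Definition dd (k : nat) : R := lam k - lprev lam k.

Lemma dd_pos k : 0 < dd k.
Proof. unfold dd; destruct k; simpl. specialize (hpos 0); lra. specialize (hinc k); lra. Qed.

Definition gg (x : seqC) (k : nat) : C :=
  Cmult (RtoC (lam k - lprev lam k))
       (Cplus (Cplus (Cmult (RtoC r) (x k)) (Cmult (RtoC s) (shift1 x k)))
              (Cmult (RtoC t) (shift1 (shift1 x) k))).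

Lemma What_eq x n : What r s t lam x n = Cmult (RtoC (/ lam n)) (sum_n (gg x) n).
Proof. reflexivity. Qed.

Lemma What_lin (a : C) (x y : seqC) :
  What r s t lam (fun n => Cplus (Cmult a (x n)) (y n)) =
  (fun n => Cplus (Cmult a (What r s t lam x n)) (What r s t lam y n)).
Proof.
  apply functional_extensionality; intro n.
  rewrite !What_eq.
  rewrite (sum_lin _ (gg x) (gg y) a).
  - ring.
  - intro k. unfold gg. destruct k as [|[|k]]; simpl; ring.
Qed.

Lemma sum_eq_all (x y : seqC) :
  (forall n, sum_n (gg x) n = sum_n (gg y) n) -> forall n, gg x n = gg y n.
Proof.
  intros H n; destruct n.
  - specialize (H 0%nat); rewrite !sum_O in H; exact H.
  - pose proof (H (S n)) as H1. rewrite !sum_Sn, (H n) in H1. repeat match type of H1 with context[@plus C_AbelianMonoid ?a ?b] => change (@plus C_AbelianMonoid a b) with (Cplus a b) in H1 end.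
    replace (gg x (S n)) with (Cminus (Cplus (sum_n (gg y) n) (gg x (S n))) (sum_n (gg y) n)) by ring.
    rewrite H1; ring.
Qed.

Lemma What_inj (x y : seqC) : What r s t lam x = What r s t lam y -> x = y.
Proof.
  intro E.
  assert (Hs : forall n, sum_n (gg x) n = sum_n (gg y) n).
  { intro n. assert (E1 := f_equal (fun f => f n) E). simpl in E1.
    rewrite !What_eq in E1.
    assert (HlR : lam n <> 0) by (specialize (hpos n); lra).
    assert (Hl : RtoC (lam n) <> RtoC 0) by (apply RtoC_neq0; auto).
    replace (sum_n (gg x) n) with (Cmult (RtoC (lam n)) (Cmult (RtoC (/ lam n)) (sum_n (gg x) n))).
    2:{ rewrite RtoC_inv by auto. field; repeat split; auto; try (apply RtoC_neq0; auto). }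
    rewrite E1. fixC. rewrite RtoC_inv by auto. field; repeat split; auto; try (apply RtoC_neq0; auto). }
  pose proof (sum_eq_all x y Hs) as Hg.
  assert (Hc : forall n k, (k <= n)%nat -> x k = y k).
  { induction n as [|n IH]; intros k Hk.
    - assert (k = 0%nat) by lia; subst k.
      pose proof (Hg 0%nat) as H0; unfold gg in H0; simpl in H0.
      assert (Hd : RtoC (lam 0 - 0) <> RtoC 0) by (apply RtoC_neq0; specialize (hpos 0); lra).
      assert (Hr : RtoC r <> RtoC 0) by (apply RtoC_neq0; auto).
      replace (x 0%nat) with (Cmult (/ (Cmult (RtoC (lam 0 - 0)) (RtoC r)))
        (Cmult (RtoC (lam 0 - 0)) (Cplus (Cplus (Cmult (RtoC r) (x 0%nat)) (Cmult (RtoC s) (RtoC 0))) (Cmult (RtoC t) (RtoC 0))))).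
      2:{ field; repeat split; auto; try (apply RtoC_neq0; auto). }
      rewrite H0. field; repeat split; auto; try (apply RtoC_neq0; auto).
    - destruct (Nat.eq_dec k (S n)) as [->|Hne]; [|apply IH; lia].
      pose proof (Hg (S n)) as H0; unfold gg in H0.
      assert (E1 : shift1 x (S n) = shift1 y (S n)) by (simpl; apply IH; lia).
      assert (E2 : shift1 (shift1 x) (S n) = shift1 (shift1 y) (S n)).
      { simpl. destruct n; simpl; [reflexivity|]. apply IH; lia. }
      rewrite E1, E2 in H0.
      assert (Hd : RtoC (lam (S n) - lprev lam (S n)) <> RtoC 0)
        by (apply RtoC_neq0; pose proof (dd_pos (S n)); unfold dd in *; lra).
      assert (Hr : RtoC r <> RtoC 0) by (apply RtoC_neq0; auto).
      set (d := RtoC (lam (S n) - lprev lam (S n))) in *.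
      set (a := shift1 y (S n)) in *. set (b := shift1 (shift1 y) (S n)) in *.
      replace (x (S n)) with (Cmult (/ (Cmult d (RtoC r)))
        (Cminus (Cmult d (Cplus (Cplus (Cmult (RtoC r) (x (S n))) (Cmult (RtoC s) a)) (Cmult (RtoC t) b)))
                (Cmult d (Cplus (Cmult (RtoC s) a) (Cmult (RtoC t) b))))).
      2:{ field; repeat split; auto; try (apply RtoC_neq0; auto). }
      rewrite H0. field; repeat split; auto; try (apply RtoC_neq0; auto). }
  apply functional_extensionality; intro n. apply (Hc n); lia.
Qed.

Section Surj.
Variable y : seqC.
Definition zz (k : nat) : C :=
  Cminus (Cmult (RtoC (lam k)) (y k)) (Cmult (RtoC (lprev lam k)) (shift1 y k)).
Definition step (k : nat) (a b : C) : C :=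
  Cdiv (Cminus (Cminus (Cdiv (zz k) (RtoC (lam k - lprev lam k))) (Cmult (RtoC s) a))
        (Cmult (RtoC t) b)) (RtoC r).
Fixpoint solp (n : nat) : C * C :=
  match n with
  | O => (step 0 (RtoC 0) (RtoC 0), RtoC 0)
  | S m => (step (S m) (fst (solp m)) (snd (solp m)), fst (solp m))
  end.
Definition xs (n : nat) : C := fst (solp n).

Lemma xs_step k : xs k = step k (shift1 xs k) (shift1 (shift1 xs) k).
Proof.
  destruct k as [|k]; [reflexivity|].
  unfold xs at 1; simpl. f_equal. destruct k; reflexivity.
Qed.

Lemma gg_xs k : gg xs k = zz k.
Proof.
  unfold gg. rewrite (xs_step k) at 1. unfold step.
  assert (Hd : RtoC (lam k - lprev lam k) <> RtoC 0)
    by (apply RtoC_neq0; pose proof (dd_pos k); unfold dd in *; lra).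
  assert (Hr : RtoC r <> RtoC 0) by (apply RtoC_neq0; auto).
  field; repeat split; auto; try (apply RtoC_neq0; auto).
Qed.

Lemma sum_zz n : sum_n zz n = Cmult (RtoC (lam n)) (y n).
Proof.
  induction n.
  - rewrite sum_O. unfold zz; simpl. ring.
  - rewrite sum_Sn, IHn; fixC. unfold zz; simpl. ring.
Qed.

Lemma What_xs : What r s t lam xs = y.
Proof.
  apply functional_extensionality; intro n. rewrite What_eq.
  rewrite (sum_n_ext _ zz n gg_xs), sum_zz.
  assert (HlR : lam n <> 0) by (specialize (hpos n); lra).
    assert (Hl : RtoC (lam n) <> RtoC 0) by (apply RtoC_neq0; auto).
  rewrite RtoC_inv by auto. field; repeat split; auto; try (apply RtoC_neq0; auto).
Qed.
End Surj.

Lemma gen (Y : seqC -> Prop) (nY : seqC -> R) :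
  norm_iso (lamB Y r s t lam) Y (fun x => nY (What r s t lam x)) nY.
Proof.
  exists (What r s t lam). split; [|split; [|split; [|split]]].
  - intros a x y _ _. apply What_lin.
  - intros x Hx; exact Hx.
  - intros x y _ _; apply What_inj.
  - intros y Hy. exists (xs y). unfold lamB. rewrite What_xs. auto.
  - intros; reflexivity.
Qed.
End Main.

Theorem theorem2 (r s t : R) (lam : nat -> R)
  (hr : r <> 0) (hs : s <> 0) (ht : t <> 0)
  (hpos : forall k, 0 < lam k)
  (hinc : forall k, lam k < lam (S k))
  (hinf : is_lim_seq lam p_infty) :
  norm_iso (lamB is_c0 r s t lam) is_c0 (lamB_supnorm r s t lam) supnorm /\
  norm_iso (lamB is_c r s t lam) is_c (lamB_supnorm r s t lam) supnorm /\
  norm_iso (lamB is_linf r s t lam) is_linf (lamB_supnorm r s t lam) supnorm /\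
  (forall p : R, 1 <= p ->
     norm_iso (lamB (is_lp p) r s t lam) (is_lp p)
              (lamB_lpnorm p r s t lam) (lpnorm p)).
Proof.
  split; [|split; [|split]].
  - exact (gen r s t lam hr hpos hinc is_c0 supnorm).
  - exact (gen r s t lam hr hpos hinc is_c supnorm).
  - exact (gen r s t lam hr hpos hinc is_linf supnorm).
  - intros p _. exact (gen r s t lam hr hpos hinc (is_lp p) (lpnorm p)).
Qed.
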